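(* Let $(X,d)$ be a Cantor space. Then there exists $f\in\mathcal{H}(X)$ which has the continuous shadowing property but is not topologically stable.
   Context: A Cantor space is a compact metric space without isolated points that is totally disconnected. $\mathcal{H}(X)$ is the set of homeomorphisms; $d_{C^0}(f,g)=\sup_x d(f(x),g(x))$; $D(f,g)=\max\{d_{C^0}(f,g),d_{C^0}(f^{-1},g^{-1})\}$. $f$ is topologically stable if for every $\epsilon>0$ there is $\delta>0$ such that for every $g\in\mathcal{H}(X)$ with $D(f,g)<\delta$ there is a continuous $h:X\to X$ with $d_{C^0}(h,\mathrm{id}_X)<\epsilon$ and $h\circ g=f\circ h$. With $\tilde d(x,y)=\sup_{i\in\mathbb{Z}}2^{-|i|}d(x_i,y_i)$ on $X^{\mathbb{Z}}$ and $P(f,\delta)$ the set of $(x_i)_{i\in\mathbb{Z}}$ with $d(f(x_i),x_{i+1})\le\delta$ for all $i$, $f$ has the continuous shadowing property if for every $\epsilon>0$ there are $\delta>0$ and a continuous $r:P(f,\delta)\to X$ with $d(f^i(r(x)),x_i)\le\epsilon$ for all $x\in P(f,\delta)$, $i\in\mathbb{Z}$. *)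

(* Defs.v *)
From Stdlib Require Import Reals Lra ZArith List.
Open Scope R_scope.

Section Metric.
Context {X : Type} (d : X -> X -> R).

Definition is_metric : Prop :=
  (forall x y, 0 <= d x y) /\
  (forall x y, d x y = 0 <-> x = y) /\
  (forall x y, d x y = d y x) /\
  (forall x y z, d x z <= d x y + d y z).

Definition open_set (U : X -> Prop) : Prop :=
  forall x, U x -> exists r, 0 < r /\ forall y, d x y < r -> U y.

Definition compact_space : Prop :=
  forall (I : Type) (U : I -> X -> Prop),
    (forall i, open_set (U i)) ->
    (forall x, exists i, U i x) ->
    exists l : list I, forall x, exists i, In i l /\ U i x.

Definition no_isolated_points : Prop :=
  forall x eps, 0 < eps -> exists y, y <> x /\ d x y < eps.

Definition connected_subset (A : X -> Prop) : Prop :=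
  ~ (exists U V : X -> Prop, open_set U /\ open_set V /\
       (forall x, A x -> U x \/ V x) /\
       (exists x, A x /\ U x) /\ (exists x, A x /\ V x) /\
       (forall x, A x -> U x -> V x -> False)).

Definition totally_disconnected : Prop :=
  forall A : X -> Prop, connected_subset A -> forall x y, A x -> A y -> x = y.

Definition cantor_space : Prop :=
  is_metric /\ inhabited X /\ compact_space /\ no_isolated_points /\
  totally_disconnected.

Definition continuous (f : X -> X) : Prop :=
  forall x eps, 0 < eps -> exists del, 0 < del /\
    forall y, d x y < del -> d (f x) (f y) < eps.

Definition homeo (f finv : X -> X) : Prop :=
  continuous f /\ continuous finv /\
  (forall x, f (finv x) = x) /\ (forall x, finv (f x) = x).

Definition dC0_lt (f g : X -> X) (eps : R) : Prop :=
  exists c, c < eps /\ forall x, d (f x) (g x) <= c.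

Definition D_lt (f finv g ginv : X -> X) (eps : R) : Prop :=
  dC0_lt f g eps /\ dC0_lt finv ginv eps.

Definition topologically_stable (f finv : X -> X) : Prop :=
  forall eps, 0 < eps -> exists del, 0 < del /\
    forall g ginv, homeo g ginv -> D_lt f finv g ginv del ->
      exists h : X -> X, continuous h /\ dC0_lt h (fun x => x) eps /\
        forall x, h (g x) = f (h x).

Definition dtilde_lt (x y : Z -> X) (eps : R) : Prop :=
  exists c, c < eps /\
    forall i : Z, (/ 2) ^ (Z.abs_nat i) * d (x i) (y i) <= c.

Definition pseudo_orbit (f : X -> X) (del : R) (x : Z -> X) : Prop :=
  forall i : Z, d (f (x i)) (x (i + 1)%Z) <= del.

Definition continuous_on_P (f : X -> X) (del : R) (r : (Z -> X) -> X) : Prop :=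
  forall x, pseudo_orbit f del x -> forall eps, 0 < eps -> exists eta, 0 < eta /\
    forall y, pseudo_orbit f del y -> dtilde_lt x y eta -> d (r x) (r y) < eps.

Definition zpow (f finv : X -> X) (i : Z) (x : X) : X :=
  match i with
  | Z0 => x
  | Zpos p => Nat.iter (Pos.to_nat p) f x
  | Zneg p => Nat.iter (Pos.to_nat p) finv x
  end.

Definition continuous_shadowing (f finv : X -> X) : Prop :=
  forall eps, 0 < eps -> exists del, 0 < del /\
    exists r : (Z -> X) -> X, continuous_on_P f del r /\
      forall x, pseudo_orbit f del x ->
        forall i : Z, d (zpow f finv i (r x)) (x i) <= eps.

End Metric.

(* Main.v *)
From Stdlib Require Import Reals Lra Lia ZArith List Classical ClassicalEpsilon
  FunctionalExtensionality PropExtensionality Wf_nat Arith Bool.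
From Stdlib Require Cantor.
Require Import Defs.
Open Scope R_scope.

Section Basic.
Context {X : Type} (d : X -> X -> R) (Hm : is_metric d).

Lemma d_nn x y : 0 <= d x y. Proof. apply Hm. Qed.
Lemma d_xx x : d x x = 0. Proof. apply Hm. reflexivity. Qed.
Lemma d_sym x y : d x y = d y x. Proof. apply Hm. Qed.
Lemma d_tri x y z : d x z <= d x y + d y z. Proof. apply Hm. Qed.
Lemma d_eq x y : d x y = 0 -> x = y. Proof. apply Hm. Qed.

Lemma open_ball (c : X) (r : R) : open_set d (fun y => d c y < r).
Proof.
  intros y Hy. exists (r - d c y). split; [lra|].
  intros z Hz. pose proof (d_tri c y z). lra.
Qed.

Lemma open_inter_list {I : Type} (l : list I) (P : I -> X -> Prop) :
  (forall i, In i l -> open_set d (P i)) ->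
  open_set d (fun y => forall i, In i l -> P i y).
Proof.
  induction l as [|i0 l IH]; intros HP y Hy.
  - exists 1. split; [lra|]. intros z _ i [].
  - destruct (HP i0 (or_introl eq_refl) y (Hy i0 (or_introl eq_refl))) as [r1 [Hr1 H1]].
    destruct (IH (fun i Hi => HP i (or_intror Hi)) y (fun i Hi => Hy i (or_intror Hi)))
      as [r2 [Hr2 H2]].
    exists (Rmin r1 r2). split; [apply Rmin_glb_lt; lra|].
    intros z Hz i [<-|Hi].
    + apply H1. pose proof (Rmin_l r1 r2). lra.
    + apply H2; [|exact Hi]. pose proof (Rmin_r r1 r2). lra.
Qed.

Lemma list_min {A : Type} (l : list A) (f : A -> R) :
  (forall p, In p l -> 0 < f p) -> exists eta, 0 < eta /\ forall p, In p l -> eta <= f p.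
Proof.
  induction l as [|p0 l IH]; intros Hf.
  - exists 1. split; [lra|]. intros p [].
  - destruct (IH (fun p Hp => Hf p (or_intror Hp))) as [e [He H]].
    exists (Rmin e (f p0)). split.
    + apply Rmin_glb_lt; [lra| apply Hf; now left].
    + intros p [<-|Hp]. apply Rmin_r. pose proof (Rmin_l e (f p0)). pose proof (H p Hp). lra.
Qed.

Lemma list_max_nat {A : Type} (l : list A) (f : A -> nat) :
  exists N, forall p, In p l -> (f p <= N)%nat.
Proof.
  induction l as [|p0 l [N HN]].
  - exists 0%nat. intros p [].
  - exists (Nat.max N (f p0)). intros p [<-|Hp]. lia. specialize (HN p Hp). lia.
Qed.

Context (Hc : compact_space d).

Lemma lebesgue (G : X -> R -> Prop) :
  (forall y, exists r, 0 < r /\ G y r) ->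
  exists eta, 0 < eta /\ forall z, exists y r, 0 < r /\ G y r /\ d y z < r / 2 /\ eta <= r / 2.
Proof.
  intros HG.
  set (I := {p : X * R | 0 < snd p /\ G (fst p) (snd p)}).
  destruct (Hc I (fun p z => d (fst (proj1_sig p)) z < snd (proj1_sig p) / 2)) as [l Hl].
  - intros p. apply open_ball.
  - intros z. destruct (HG z) as [r [Hr Gr]].
    exists (exist _ (z, r) (conj Hr Gr)). simpl. rewrite d_xx. lra.
  - destruct (list_min l (fun p => snd (proj1_sig p) / 2)) as [e [He Hle]].
    { intros [[y r] [Hr Gr]] _. simpl in *. lra. }
    exists e. split; [exact He|]. intros z.
    destruct (Hl z) as [[[y r] [Hr Gr]] [Hin Hz]].
    exists y, r. simpl in *. repeat split; auto.
    apply (Hle _ Hin).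
Qed.

Lemma compact_nested (C : nat -> X -> Prop) :
  (forall n, open_set d (fun y => ~ C n y)) ->
  (forall n y, C (S n) y -> C n y) ->
  (forall n, exists y, C n y) -> exists y, forall n, C n y.
Proof.
  intros Hcl Hdec Hne. apply NNPP. intros Hno.
  destruct (Hc nat (fun n y => ~ C n y) Hcl) as [l Hl].
  - intros y. apply NNPP. intros H. apply Hno. exists y. intros n.
    apply NNPP. intros Hn. apply H. exists n. exact Hn.
  - destruct (list_max_nat l (fun n => n)) as [N HN].
    destruct (Hne N) as [y Hy]. destruct (Hl y) as [n [Hin Hn]].
    apply Hn. specialize (HN n Hin). simpl in HN.
    clear Hin Hl. induction HN; auto.
Qed.

End Basic.

Section Zero.
Context {X : Type} (d : X -> X -> R) (Hm : is_metric d) (Hc : compact_space d).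

Definition clopen (C : X -> Prop) := open_set d C /\ open_set d (fun y => ~ C y).

Lemma clopen_from_cover x (W : X -> Prop) : open_set d W ->
  (forall y, (forall C, clopen C -> C x -> C y) -> W y) ->
  exists C, clopen C /\ C x /\ forall y, C y -> W y.
Proof.
  intros HW HQ.
  set (I := option {C : X -> Prop | clopen C /\ C x}).
  set (U := fun (i : I) y => match i with None => W y | Some c => ~ proj1_sig c y end).
  destruct (Hc I U) as [l Hl].
  - intros [[c [[Hc1 Hc2] Hc3]]|]; simpl; [exact Hc2|exact HW].
  - intros y. destruct (classic (W y)) as [Hy|Hy]. exists None. exact Hy.
    assert (~ forall C, clopen C -> C x -> C y) as H by (intro H; apply Hy, HQ, H).
    apply not_all_ex_not in H as [C H].
    apply imply_to_and in H as [H1 H].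
    apply imply_to_and in H as [H2 H3].
    exists (Some (exist _ C (conj H1 H2))). exact H3.
  - set (Cs := fun y => forall i, In i l ->
                 match i with Some c => proj1_sig c y | None => True end).
    exists Cs. split; [split|split].
    + apply (open_inter_list d l (fun i y => match i with Some c => proj1_sig c y | None => True end)).
      intros [[c [[Ho Hco] Hcx]]|] _; simpl. exact Ho. intros y _. exists 1. split. lra. auto.
    + intros y Hy. unfold Cs in Hy.
      apply not_all_ex_not in Hy as [i Hy]. apply imply_to_and in Hy as [Hi Hy].
      destruct i as [[c [[Hoo Hco] Hcxx]]|]; [|contradiction]. simpl in Hy.
      destruct (Hco y Hy) as [r [Hr Hb]]. exists r. split; auto.
      intros z Hz Hcz. apply (Hb z Hz). exact (Hcz _ Hi).
    + intros [[c [Hcc Hcx]]|] _; simpl; auto.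
    + intros y Hy. destruct (Hl y) as [i [Hi Hu]].
      specialize (Hy i Hi). destruct i as [c|]; simpl in *; [contradiction|exact Hu].
Qed.

Lemma closed_sep (A B : X -> Prop) :
  open_set d (fun y => ~ A y) -> open_set d (fun y => ~ B y) ->
  (forall y, A y -> B y -> False) ->
  exists eta, 0 < eta /\ forall a b, A a -> B b -> eta <= d a b.
Proof.
  intros HA HB Hdis.
  destruct (lebesgue d Hm Hc (fun y r => (forall w, d y w < r -> ~ A w) \/ (forall w, d y w < r -> ~ B w)))
    as [eta [He Hl]].
  - intros y. destruct (classic (A y)) as [Ay|Ay].
    + assert (~ B y) as By by (intro; eapply Hdis; eauto).
      destruct (HB y By) as [r [Hr H]]. exists r. split; auto.
    + destruct (HA y Ay) as [r [Hr H]]. exists r. split; auto.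
  - exists eta. split; auto. intros a b Ha Hb. apply Rnot_lt_le. intros Hab.
    destruct (Hl a) as [y [r [Hr [G [Hya Her]]]]].
    pose proof (d_tri d Hm y a b).
    destruct G as [G|G]; [apply (G a); auto; lra|apply (G b); auto; lra].
Qed.

Context (Htd : totally_disconnected d).

Lemma clopen_small x eps : 0 < eps ->
  exists C, clopen C /\ C x /\ forall y, C y -> d x y < eps.
Proof.
  intros He. apply NNPP. intros Hno.
  set (Q := fun y => forall C, clopen C -> C x -> C y).
  assert (exists z, Q z /\ ~ d x z < eps) as [z [Qz Hz]].
  { apply NNPP. intros H. apply Hno.
    apply (clopen_from_cover x (fun y => d x y < eps) (open_ball d Hm x eps)).
    intros y Qy. apply NNPP. intros Hy. apply H. exists y. auto. }
  assert (Qx : Q x) by (intros C _ Cx; exact Cx).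
  assert (x = z) as Exz.
  { apply (Htd Q); auto.
    intros [U [V [oU [oV [cov [[p [Qp Up]] [[q [Qq Vq]] disj]]]]]]].
    assert (HQc : open_set d (fun y => ~ Q y)).
    { intros y Hy. unfold Q in Hy.
      apply not_all_ex_not in Hy as [C Hy].
      apply imply_to_and in Hy as [[H1 H2] Hy]. apply imply_to_and in Hy as [Hcx Hcy].
      destruct (H2 y Hcy) as [r [Hr Hb]]. exists r. split; auto.
      intros w Hw Qw. apply (Hb w Hw). apply Qw; auto. split; auto. }
    set (A := fun y => Q y /\ ~ V y). set (B := fun y => Q y /\ ~ U y).
    assert (oA : open_set d (fun y => ~ A y)).
    { intros y Hy. destruct (classic (Q y)) as [Qy|Qy].
      - assert (V y) as Vy by (apply NNPP; intro; apply Hy; split; auto).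
        destruct (oV y Vy) as [r [Hr Hb]]. exists r. split; auto.
        intros w Hw [_ Hv]. apply Hv, Hb, Hw.
      - destruct (HQc y Qy) as [r [Hr Hb]]. exists r. split; auto.
        intros w Hw [Hq _]. apply (Hb w Hw Hq). }
    assert (oB : open_set d (fun y => ~ B y)).
    { intros y Hy. destruct (classic (Q y)) as [Qy|Qy].
      - assert (U y) as Uy by (apply NNPP; intro; apply Hy; split; auto).
        destruct (oU y Uy) as [r [Hr Hb]]. exists r. split; auto.
        intros w Hw [_ Hv]. apply Hv, Hb, Hw.
      - destruct (HQc y Qy) as [r [Hr Hb]]. exists r. split; auto.
        intros w Hw [Hq _]. apply (Hb w Hw Hq). }
    destruct (closed_sep A B oA oB) as [eta [Heta Hsep]].
    { intros y [Qy Vy] [_ Uy]. destruct (cov y Qy); auto. }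
    set (U' := fun y => exists a, A a /\ d a y < eta / 2).
    set (V' := fun y => exists b, B b /\ d b y < eta / 2).
    assert (oU' : open_set d U').
    { intros y [a [Aa Hay]]. exists (eta/2 - d a y). split. lra.
      intros w Hw. exists a. split; auto. pose proof (d_tri d Hm a y w). lra. }
    assert (oV' : open_set d V').
    { intros y [a [Aa Hay]]. exists (eta/2 - d a y). split. lra.
      intros w Hw. exists a. split; auto. pose proof (d_tri d Hm a y w). lra. }
    assert (dis' : forall y, U' y -> V' y -> False).
    { intros y [a [Aa Ha]] [b [Bb Hb]]. pose proof (Hsep a b Aa Bb).
      pose proof (d_tri d Hm a y b). rewrite (d_sym d Hm y b) in H0. lra. }
    assert (cQ : forall y, Q y -> U' y \/ V' y).
    { intros y Qy. destruct (classic (V y)) as [Vy|Vy].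
      - right. exists y. split. split; auto. intro Uy. apply (disj y); auto.
        rewrite (d_xx d Hm). lra.
      - left. exists y. split. split; auto. rewrite (d_xx d Hm). lra. }
    assert (oUV : open_set d (fun y => U' y \/ V' y)).
    { intros y [Hy|Hy]; [destruct (oU' y Hy) as [r [Hr Hb]]|destruct (oV' y Hy) as [r [Hr Hb]]];
        exists r; split; auto. }
    destruct (clopen_from_cover x _ oUV cQ) as [C [[Co Cc] [Cx CUV]]].
    assert (Hq' : V' q).
    { exists q. split. split; auto. intro Uq. apply (disj q); auto. rewrite (d_xx d Hm). lra. }
    assert (Hp' : U' p).
    { exists p. split. split; auto. intro Vp. apply (disj p); auto. rewrite (d_xx d Hm). lra. }
    destruct (CUV x Cx) as [Ux|Vx].
    - assert (clopen (fun y => C y /\ U' y)) as Hcl.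
      { split.
        - intros y [Cy Uy]. destruct (Co y Cy) as [r1 [H1 B1]]. destruct (oU' y Uy) as [r2 [H2 B2]].
          exists (Rmin r1 r2). split. apply Rmin_glb_lt; auto.
          intros w Hw. pose proof (Rmin_l r1 r2). pose proof (Rmin_r r1 r2).
          split; [apply B1|apply B2]; lra.
        - intros y Hy. destruct (classic (C y)) as [Cy|Cy].
          + assert (V' y) as Vy.
            { destruct (CUV y Cy); auto. exfalso; auto. }
            destruct (oV' y Vy) as [r [Hr Hb]]. exists r. split; auto.
            intros w Hw [_ Uw]. apply (dis' w); auto.
          + destruct (Cc y Cy) as [r [Hr Hb]]. exists r. split; auto.
            intros w Hw [Cw _]. apply (Hb w); auto. }
      apply (dis' q); auto. apply (Qq _ Hcl). split; auto.
    - assert (clopen (fun y => C y /\ V' y)) as Hcl.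
      { split.
        - intros y [Cy Uy]. destruct (Co y Cy) as [r1 [H1 B1]]. destruct (oV' y Uy) as [r2 [H2 B2]].
          exists (Rmin r1 r2). split. apply Rmin_glb_lt; auto.
          intros w Hw. pose proof (Rmin_l r1 r2). pose proof (Rmin_r r1 r2).
          split; [apply B1|apply B2]; lra.
        - intros y Hy. destruct (classic (C y)) as [Cy|Cy].
          + assert (U' y) as Vy.
            { destruct (CUV y Cy); auto. exfalso; auto. }
            destruct (oU' y Vy) as [r [Hr Hb]]. exists r. split; auto.
            intros w Hw [_ Uw]. apply (dis' w); auto.
          + destruct (Cc y Cy) as [r [Hr Hb]]. exists r. split; auto.
            intros w Hw [Cw _]. apply (Hb w); auto. }
      apply (dis' p); auto. apply (Qp _ Hcl). split; auto. }
  subst z. apply Hz. rewrite (d_xx d Hm). exact He.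
Qed.

End Zero.

Section Base.
Context {X : Type} (d : X -> X -> R) (Hm : is_metric d) (Hc : compact_space d)
  (Htd : totally_disconnected d).

Definition rad (n : nat) := / INR (S n).
Lemma rad_pos n : 0 < rad n.
Proof. unfold rad. apply Rinv_0_lt_compat. apply lt_0_INR. lia. Qed.

Lemma exists_Cl n x : exists C, clopen d C /\ C x /\ forall y, C y -> d x y < rad n.
Proof. apply (clopen_small d Hm Hc Htd). apply rad_pos. Qed.

Definition Cl n x := proj1_sig (constructive_indefinite_description _ (exists_Cl n x)).
Lemma Cl_spec n x : clopen d (Cl n x) /\ Cl n x x /\ forall y, Cl n x y -> d x y < rad n.
Proof. unfold Cl. destruct constructive_indefinite_description as [C HC]. exact HC. Qed.

Lemma exists_L n : exists l : list X, forall z, exists x, In x l /\ Cl n x z.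
Proof.
  apply (Hc X (Cl n)).
  - intros x. apply (Cl_spec n x).
  - intros z. exists z. apply (Cl_spec n z).
Qed.

Definition Lst n := proj1_sig (constructive_indefinite_description _ (exists_L n)).
Lemma Lst_spec n z : exists x, In x (Lst n) /\ Cl n x z.
Proof. unfold Lst. destruct constructive_indefinite_description as [l Hl]. apply Hl. Qed.

Definition Bs (i : nat) : X -> Prop :=
  let (n, k) := Cantor.of_nat i in
  match nth_error (Lst n) k with Some x => Cl n x | None => fun _ => False end.

Lemma Bs_clopen i : clopen d (Bs i).
Proof.
  unfold Bs. destruct (Cantor.of_nat i) as [n k].
  destruct (nth_error (Lst n) k) as [x|].
  - apply Cl_spec.
  - split; intros y Hy. contradiction. exists 1. split. lra. auto.
Qed.

Lemma Bs_base z eps : 0 < eps -> exists i, Bs i z /\ forall y, Bs i y -> d z y < eps.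
Proof.
  intros He. destruct (archimed_cor1 (eps/2)) as [N [HN HN0]]. lra.
  destruct (Lst_spec N z) as [x [Hx Hz]].
  destruct (In_nth_error _ _ Hx) as [k Hk].
  exists (Cantor.to_nat (N, k)). unfold Bs. rewrite Cantor.cancel_of_to, Hk.
  assert (rad N <= / INR N) as HrN.
  { unfold rad. apply Rinv_le_contravar. apply lt_0_INR. exact HN0. rewrite S_INR. lra. }
  split; auto. intros y Hy.
  destruct (Cl_spec N x) as [_ [_ H]].
  pose proof (H z Hz). pose proof (H y Hy). pose proof (d_tri d Hm z x y).
  rewrite (d_sym d Hm z x) in H2. lra.
Qed.

End Base.

Lemma least_ex (P : nat -> Prop) : (exists n, P n) -> exists n, P n /\ forall m, (m < n)%nat -> ~ P m.
Proof.
  intros [n Hn]. revert Hn.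
  induction n as [n IH] using (well_founded_induction lt_wf). intro Hn.
  destruct (classic (exists m, (m < n)%nat /\ P m)) as [[m [Hm Pm]]|H].
  - exact (IH m Hm Pm).
  - exists n. split; auto. intros m Hm Pm. apply H. eauto.
Qed.

Definition bool_of (P : Prop) : bool := if excluded_middle_informative P then true else false.
Lemma bool_of_true P : bool_of P = true <-> P.
Proof. unfold bool_of. destruct excluded_middle_informative; split; auto; discriminate. Qed.
Lemma bool_of_false P : bool_of P = false <-> ~ P.
Proof. unfold bool_of. destruct excluded_middle_informative; split; auto; try discriminate; tauto. Qed.

Definition agree (N : nat) (a b : nat -> bool) := forall k, (k < N)%nat -> a k = b k.

Lemma agree_sym N a b : agree N a b -> agree N b a.
Proof. intros H k Hk. symmetry. auto. Qed.
Lemma agree_trans N a b c : agree N a b -> agree N b c -> agree N a c.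
Proof. intros H1 H2 k Hk. rewrite H1; auto. Qed.
Lemma agree_le N M a b : (M <= N)%nat -> agree N a b -> agree M a b.
Proof. intros HM H k Hk. apply H. lia. Qed.

Section Tree.
Context {X : Type} (d : X -> X -> R) (Hm : is_metric d) (Hc : compact_space d)
  (Hni : no_isolated_points d) (Hinh : inhabited X)
  (B : nat -> X -> Prop) (HBc : forall i, clopen d (B i))
  (HBb : forall z eps, 0 < eps -> exists i, B i z /\ forall y, B i y -> d z y < eps).

Definition splits (C : X -> Prop) j := (exists y, C y /\ B j y) /\ (exists y, C y /\ ~ B j y).

Definition J (C : X -> Prop) : nat :=
  match excluded_middle_informative (exists j, splits C j) with
  | left H => proj1_sig (constructive_indefinite_description _ (least_ex _ H))
  | right _ => 0%nat end.

Lemma J_spec C : (exists j, splits C j) -> splits C (J C) /\ forall m, (m < J C)%nat -> ~ splits C m.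
Proof.
  intros H. unfold J. destruct excluded_middle_informative as [H'|H']; [|contradiction].
  destruct constructive_indefinite_description as [j Hj]. exact Hj.
Qed.

Fixpoint cella (a : nat -> bool) (n : nat) : X -> Prop :=
  match n with
  | O => fun _ => True
  | S n => fun y => cella a n y /\ (B (J (cella a n)) y <-> a n = true)
  end.

Fixpoint cellx (x : X) (n : nat) : X -> Prop :=
  match n with
  | O => fun _ => True
  | S n => fun y => cellx x n y /\ (B (J (cellx x n)) y <-> B (J (cellx x n)) x)
  end.

Definition addr (x : X) (n : nat) : bool := bool_of (B (J (cellx x n)) x).

Lemma cellx_eq x n : cellx x n = cella (addr x) n.
Proof.
  induction n as [|n IH]; simpl; auto.
  rewrite IH. unfold addr. rewrite IH.
  apply functional_extensionality; intro y. apply propositional_extensionality.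
  rewrite bool_of_true. tauto.
Qed.

Lemma cella_agree N a b : agree N a b -> cella a N = cella b N.
Proof.
  induction N as [|N IH]; intros H; simpl; auto.
  rewrite IH by (apply (agree_le (S N)); auto).
  rewrite (H N) by lia. reflexivity.
Qed.

Lemma addr_eq y n : addr y n = bool_of (B (J (cella (addr y) n)) y).
Proof. unfold addr at 1. rewrite cellx_eq. reflexivity. Qed.

Lemma cella_iff n a y : cella a n y <-> agree n (addr y) a.
Proof.
  induction n as [|n IH]; simpl.
  - split; auto. intros _ k Hk. lia.
  - split.
    + intros [H1 H2]. apply IH in H1.
      intros k Hk. destruct (Nat.eq_dec k n) as [->|Hne]; [|apply H1; lia].
      rewrite addr_eq, (cella_agree n _ _ H1).
      destruct (a n) eqn:E.
      * apply bool_of_true. apply H2. reflexivity.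
      * apply bool_of_false. intro HB. apply H2 in HB. discriminate.
    + intros H. assert (H1 : agree n (addr y) a) by (apply (agree_le (S n)); auto).
      split; [apply IH; exact H1|].
      rewrite <- (H n) by lia. rewrite addr_eq, (cella_agree n _ _ H1).
      rewrite bool_of_true. tauto.
Qed.

Lemma clopen_ext (C D : X -> Prop) : clopen d C -> (forall y, C y <-> D y) -> clopen d D.
Proof.
  intros [H1 H2] E. split.
  - intros y Hy. apply E in Hy. destruct (H1 y Hy) as [r [Hr Hb]].
    exists r. split; auto. intros z Hz. apply E. auto.
  - intros y Hy. assert (~ C y) as Hy' by (rewrite E; auto). destruct (H2 y Hy') as [r [Hr Hb]].
    exists r. split; auto. intros z Hz. rewrite <- E. auto.
Qed.

Lemma clopen_and (C D : X -> Prop) : clopen d C -> clopen d D -> clopen d (fun y => C y /\ D y).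
Proof.
  intros [C1 C2] [D1 D2]. split.
  - intros y [Cy Dy]. destruct (C1 y Cy) as [r1 [H1 B1]]. destruct (D1 y Dy) as [r2 [H2 B2]].
    exists (Rmin r1 r2). split. apply Rmin_glb_lt; auto.
    intros w Hw. pose proof (Rmin_l r1 r2). pose proof (Rmin_r r1 r2).
    split; [apply B1|apply B2]; lra.
  - intros y Hy. destruct (classic (C y)) as [Cy|Cy].
    + assert (~ D y) as Dy by tauto. destruct (D2 y Dy) as [r [Hr Hb]].
      exists r. split; auto. intros w Hw [_ Dw]. exact (Hb w Hw Dw).
    + destruct (C2 y Cy) as [r [Hr Hb]].
      exists r. split; auto. intros w Hw [Cw _]. exact (Hb w Hw Cw).
Qed.

Lemma clopen_not (C : X -> Prop) : clopen d C -> clopen d (fun y => ~ C y).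
Proof.
  intros [C1 C2]. split; auto.
  intros y Hy. apply NNPP in Hy. destruct (C1 y Hy) as [r [Hr Hb]].
  exists r. split; auto.
Qed.

Lemma cella_clopen a n : clopen d (cella a n).
Proof.
  induction n as [|n IH]; simpl.
  - split; intros y Hy. exists 1. split. lra. auto. exfalso; auto.
  - apply clopen_and; auto. destruct (a n).
    + apply (clopen_ext (B (J (cella a n)))); auto. intuition.
    + apply (clopen_ext (fun y => ~ B (J (cella a n)) y)). apply clopen_not; auto.
      intuition discriminate.
Qed.

Lemma has_split C : clopen d C -> (exists y, C y) -> exists j, splits C j.
Proof.
  intros [Co _] [y Cy]. destruct (Co y Cy) as [r [Hr Hb]].
  destruct (Hni y r Hr) as [z [Hzy Hz]].
  assert (0 < d y z).
  { destruct (d_nn d Hm y z) as [H|H]; auto. exfalso. apply Hzy. symmetry. apply (d_eq d Hm). auto. }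
  destruct (HBb y (d y z) H) as [i [Hi Hs]].
  exists i. split.
  - exists y. split; auto.
  - exists z. split. apply Hb; auto. intro Hz'. specialize (Hs z Hz'). lra.
Qed.

Lemma cella_ne a n : exists y, cella a n y.
Proof.
  induction n as [|n IH]; simpl.
  - destruct Hinh as [y]. exists y. auto.
  - destruct (J_spec (cella a n) (has_split _ (cella_clopen a n) IH)) as [[[y1 [C1 B1]] [y2 [C2 B2]]] _].
    destruct (a n).
    + exists y1. split; auto. intuition.
    + exists y2. split; auto. intuition discriminate.
Qed.

Lemma addr_surj a : exists x, forall k, addr x k = a k.
Proof.
  destruct (compact_nested d Hc (cella a)) as [x Hx].
  - intros n. apply (cella_clopen a n).
  - intros n y. simpl. tauto.
  - apply cella_ne.
  - exists x. intros k. apply (proj1 (cella_iff (S k) a x) (Hx (S k))). lia.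
Qed.

Lemma addr_cont x N : exists r, 0 < r /\ forall y, d x y < r -> agree N (addr y) (addr x).
Proof.
  destruct (cella_clopen (addr x) N) as [Ho _].
  destruct (Ho x) as [r [Hr Hb]].
  - apply cella_iff. intros k _. reflexivity.
  - exists r. split; auto. intros y Hy. apply cella_iff. auto.
Qed.

Lemma nosplit a n m : (m <= J (cella a n))%nat -> ~ splits (cella a (S n)) m.
Proof.
  intros Hmn [[y1 [C1 B1]] [y2 [C2 B2]]].
  destruct (Nat.eq_dec m (J (cella a n))) as [->|ne].
  - destruct C1 as [_ E1], C2 as [_ E2]. apply B2, E2, E1, B1.
  - destruct (J_spec (cella a n) (has_split _ (cella_clopen a n) (cella_ne a n))) as [_ Hmin].
    apply (Hmin m). lia. split.
    + exists y1. split; auto. apply C1.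
    + exists y2. split; auto. apply C2.
Qed.

Lemma J_ge a n : (n <= J (cella a n))%nat.
Proof.
  induction n as [|n IH]. lia.
  destruct (J_spec (cella a (S n)) (has_split _ (cella_clopen a (S n)) (cella_ne a (S n)))) as [Hs _].
  destruct (le_lt_dec (J (cella a (S n))) (J (cella a n))) as [Hle|Hlt].
  - exfalso. exact (nosplit a n _ Hle Hs).
  - lia.
Qed.

Lemma addr_mesh x eps : 0 < eps -> exists N, forall y, agree N (addr y) (addr x) -> d x y < eps.
Proof.
  intros He. destruct (HBb x eps He) as [i [Bx Hs]].
  exists (S i). intros y Hy. apply Hs.
  apply NNPP. intros By.
  apply (nosplit (addr x) i i (J_ge (addr x) i)). split.
  - exists x. split; auto. apply cella_iff. intros k _. reflexivity.
  - exists y. split; auto. apply cella_iff. auto.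
Qed.

End Tree.

Local Open Scope nat_scope.

Fixpoint allt (a : nat -> bool) (k : nat) : bool :=
  match k with O => true | S k => a 0 && allt (fun j => a (S j)) k end.
Fixpoint allf (a : nat -> bool) (k : nat) : bool :=
  match k with O => true | S k => negb (a 0) && allf (fun j => a (S j)) k end.

Definition succ (a : nat -> bool) (k : nat) : bool := xorb (a k) (allt a k).
Definition pred (a : nat -> bool) (k : nat) : bool := xorb (a k) (allf a k).
Definition pw (a b : nat -> bool) := forall k, a k = b k.

Lemma allt_agree k a b : agree k a b -> allt a k = allt b k.
Proof.
  revert a b; induction k as [|k IH]; intros a b H; simpl; auto.
  rewrite (H 0) by lia. f_equal. apply IH. intros j Hj. apply H. lia.
Qed.
Lemma allf_agree k a b : agree k a b -> allf a k = allf b k.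
Proof.
  revert a b; induction k as [|k IH]; intros a b H; simpl; auto.
  rewrite (H 0) by lia. f_equal. apply IH. intros j Hj. apply H. lia.
Qed.

Lemma succ_agree N a b : agree N a b -> agree N (succ a) (succ b).
Proof.
  intros H k Hk. unfold succ. rewrite (H k Hk). f_equal. apply allt_agree.
  intros j Hj. apply H. lia.
Qed.
Lemma pred_agree N a b : agree N a b -> agree N (pred a) (pred b).
Proof.
  intros H k Hk. unfold pred. rewrite (H k Hk). f_equal. apply allf_agree.
  intros j Hj. apply H. lia.
Qed.
Lemma succ_pw a b : pw a b -> pw (succ a) (succ b).
Proof. intros H k. apply (succ_agree (S k)). intros j _. apply H. lia. Qed.
Lemma pred_pw a b : pw a b -> pw (pred a) (pred b).
Proof. intros H k. apply (pred_agree (S k)). intros j _. apply H. lia. Qed.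

Lemma allf_succ k a : allf (succ a) k = allt a k.
Proof.
  revert a; induction k as [|k IH]; intros a; simpl; auto.
  unfold succ at 1. simpl. destruct (a 0) eqn:E; simpl.
  - rewrite <- IH. apply allf_agree. intros j _. unfold succ. simpl. rewrite E. reflexivity.
  - reflexivity.
Qed.
Lemma allt_pred k a : allt (pred a) k = allf a k.
Proof.
  revert a; induction k as [|k IH]; intros a; simpl; auto.
  unfold pred at 1. simpl. destruct (a 0) eqn:E; simpl.
  - reflexivity.
  - rewrite <- IH. apply allt_agree. intros j _. unfold pred. simpl. rewrite E. reflexivity.
Qed.

Lemma pred_succ a : pw (pred (succ a)) a.
Proof. intros k. unfold pred at 1. rewrite allf_succ. unfold succ. destruct (a k), (allt a k); reflexivity. Qed.
Lemma succ_pred a : pw (succ (pred a)) a.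
Proof. intros k. unfold succ at 1. rewrite allt_pred. unfold pred. destruct (a k), (allf a k); reflexivity. Qed.

Lemma succ_succ_0 a : succ (succ a) 0 = a 0.
Proof. unfold succ. simpl. destruct (a 0); reflexivity. Qed.

Lemma succ_succ_S a j : succ (succ a) (S j) = succ (fun i => a (S i)) j.
Proof.
  unfold succ at 1. simpl. unfold succ at 2. simpl. destruct (a 0) eqn:E; simpl.
  - rewrite xorb_false_r. unfold succ. simpl. rewrite E. reflexivity.
  - assert (Hs : forall i, succ a (S i) = a (S i)).
    { intros i. unfold succ. simpl. rewrite E. simpl. apply xorb_false_r. }
    rewrite Hs. unfold succ at 2. f_equal. apply allt_agree.
    intros i _. apply Hs.
Qed.

Lemma iter_pw n a b : pw a b -> pw (Nat.iter n succ a) (Nat.iter n succ b).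
Proof. induction n; simpl; auto. intros H. apply succ_pw. auto. Qed.

Lemma iter_add {A} (f : A -> A) n m x : Nat.iter (n + m) f x = Nat.iter n f (Nat.iter m f x).
Proof. induction n; simpl; congruence. Qed.

Definition T (K : nat) (a : nat -> bool) (k : nat) : bool :=
  if k <? K then a k else succ (fun j => a (K + j)) (k - K).

Lemma iter_pow K : forall a k, Nat.iter (2 ^ K) succ a k = T K a k.
Proof.
  induction K as [|K IH]; intros a k.
  - unfold T. simpl. rewrite Nat.sub_0_r. reflexivity.
  - replace (2 ^ S K) with (2 ^ K + 2 ^ K) by (simpl; lia).
    rewrite iter_add, IH.
    unfold T at 1. destruct (Nat.ltb_spec k K) as [Hk|Hk].
    + rewrite IH. unfold T. rewrite (proj2 (Nat.ltb_lt k K) Hk).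
      rewrite (proj2 (Nat.ltb_lt k (S K))) by lia. reflexivity.
    + set (c := fun j => a (K + j)).
      rewrite (succ_pw _ (succ c)).
      2:{ intros j. rewrite IH. unfold T. rewrite (proj2 (Nat.ltb_ge (K + j) K)) by lia.
          replace (K + j - K) with j by lia. reflexivity. }
      unfold T. destruct (Nat.eq_dec k K) as [->|Hne].
      * rewrite Nat.sub_diag, succ_succ_0. rewrite (proj2 (Nat.ltb_lt K (S K))) by lia.
        unfold c. f_equal. lia.
      * rewrite (proj2 (Nat.ltb_ge k (S K))) by lia.
        replace (k - K) with (S (k - S K)) by lia. rewrite succ_succ_S.
        apply succ_pw. intros j. unfold c. f_equal. lia.
Qed.

Lemma iter_pow_digit K a : Nat.iter (2 ^ K) succ a K = negb (a K).
Proof.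
  rewrite iter_pow. unfold T. rewrite Nat.ltb_irrefl, Nat.sub_diag.
  unfold succ. simpl. rewrite Nat.add_0_r. destruct (a K); reflexivity.
Qed.

Definition gsucc (K : nat) (a : nat -> bool) (k : nat) : bool := if k <? K then succ a k else a k.
Definition gpred (K : nat) (a : nat -> bool) (k : nat) : bool := if k <? K then pred a k else a k.

Lemma gsucc_agree K N a b : agree N a b -> agree N (gsucc K a) (gsucc K b).
Proof.
  intros H k Hk. unfold gsucc. destruct (k <? K). apply (succ_agree N); auto. auto.
Qed.
Lemma gpred_agree K N a b : agree N a b -> agree N (gpred K a) (gpred K b).
Proof.
  intros H k Hk. unfold gpred. destruct (k <? K). apply (pred_agree N); auto. auto.
Qed.

Lemma gsucc_iter K m : forall a k,
  Nat.iter m (gsucc K) a k = if k <? K then Nat.iter m succ a k else a k.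
Proof.
  induction m as [|m IH]; intros a k; simpl.
  - destruct (k <? K); reflexivity.
  - unfold gsucc at 1. destruct (Nat.ltb_spec k K) as [Hk|Hk].
    + apply (succ_agree (S k)); [|lia]. intros j Hj. rewrite IH.
      rewrite (proj2 (Nat.ltb_lt j K)) by lia. reflexivity.
    + rewrite IH. rewrite (proj2 (Nat.ltb_ge k K)) by lia. reflexivity.
Qed.

Lemma gsucc_period K a : pw (Nat.iter (2 ^ K) (gsucc K) a) a.
Proof.
  intros k. rewrite gsucc_iter. destruct (Nat.ltb_spec k K) as [Hk|Hk]; auto.
  rewrite iter_pow. unfold T. rewrite (proj2 (Nat.ltb_lt k K)) by lia. reflexivity.
Qed.

Lemma gpred_gsucc K a : pw (gpred K (gsucc K a)) a.
Proof.
  intros k. unfold gpred. destruct (Nat.ltb_spec k K) as [Hk|Hk].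
  - rewrite <- (pred_succ a k). apply (pred_agree (S k)); [|lia].
    intros j Hj. unfold gsucc. rewrite (proj2 (Nat.ltb_lt j K)) by lia. reflexivity.
  - unfold gsucc. rewrite (proj2 (Nat.ltb_ge k K)) by lia. reflexivity.
Qed.
Lemma gsucc_gpred K a : pw (gsucc K (gpred K a)) a.
Proof.
  intros k. unfold gsucc. destruct (Nat.ltb_spec k K) as [Hk|Hk].
  - rewrite <- (succ_pred a k). apply (succ_agree (S k)); [|lia].
    intros j Hj. unfold gpred. rewrite (proj2 (Nat.ltb_lt j K)) by lia. reflexivity.
  - unfold gpred. rewrite (proj2 (Nat.ltb_ge k K)) by lia. reflexivity.
Qed.

Local Open Scope R_scope.

Section Dyn.
Context {X : Type} (d : X -> X -> R) (Hm : is_metric d) (Hc : compact_space d)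
  (Hinh : inhabited X) (a : X -> nat -> bool)
  (A1 : forall x eps, 0 < eps -> exists N, forall y, agree N (a y) (a x) -> d x y < eps)
  (A2 : forall al, exists x, forall k, a x k = al k)
  (A3 : forall x N, exists r, 0 < r /\ forall y, d x y < r -> agree N (a y) (a x)).

Lemma a_inj x y : pw (a x) (a y) -> x = y.
Proof.
  intros H. apply (d_eq d Hm). destruct (d_nn d Hm x y) as [Hp|Hz]; auto.
  destruct (A1 x (d x y) Hp) as [N HN]. exfalso.
  specialize (HN y (fun k _ => eq_sym (H k))). lra.
Qed.

Lemma U3 N : exists eta, 0 < eta /\ forall x y, d x y < eta -> agree N (a x) (a y).
Proof.
  destruct (lebesgue d Hm Hc (fun y r => forall w, d y w < r -> agree N (a w) (a y))) as [eta [He Hl]].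
  - intros y. apply A3.
  - exists eta. split; auto. intros z w Hzw.
    destruct (Hl z) as [y [r [Hr [G [Hyz Her]]]]].
    pose proof (d_tri d Hm y z w).
    apply (agree_trans _ _ (a y)). apply G. lra. apply agree_sym, G. lra.
Qed.

Lemma U1 eps : 0 < eps -> exists N, forall x y, agree N (a x) (a y) -> d x y < eps.
Proof.
  intros He.
  set (I := {p : X * nat | forall w, agree (snd p) (a w) (a (fst p)) -> d (fst p) w < eps / 2}).
  destruct (Hc I (fun p w => agree (snd (proj1_sig p)) (a w) (a (fst (proj1_sig p))))) as [l Hl].
  - intros [[c N] Hp] w Hw. simpl in *. destruct (A3 w N) as [r [Hr Hb]].
    exists r. split; auto. intros z Hz. eapply agree_trans; eauto.
  - intros z. destruct (A1 z (eps/2)) as [N HN]. lra.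
    exists (exist _ (z, N) HN). simpl. intros k _. reflexivity.
  - destruct (list_max_nat l (fun p => snd (proj1_sig p))) as [N HN].
    exists N. intros x y Hxy.
    destruct (Hl x) as [[[c M] Hp] [Hin Hx]]. simpl in *.
    specialize (HN _ Hin). simpl in HN.
    pose proof (Hp x Hx).
    assert (agree M (a y) (a c)).
    { apply (agree_trans _ _ (a x)); auto. apply (agree_le N); auto. apply agree_sym; auto. }
    pose proof (Hp y H0). pose proof (d_tri d Hm x c y). rewrite (d_sym d Hm x c) in H2. lra.
Qed.

Definition inv (al : nat -> bool) : X := proj1_sig (constructive_indefinite_description _ (A2 al)).
Lemma inv_spec al : pw (a (inv al)) al.
Proof. unfold inv. destruct constructive_indefinite_description as [x Hx]. exact Hx. Qed.

Definition F (phi : (nat -> bool) -> nat -> bool) (x : X) : X := inv (phi (a x)).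
Definition compat (phi : (nat -> bool) -> nat -> bool) :=
  forall N al be, agree N al be -> agree N (phi al) (phi be).

Lemma compat_pw phi : compat phi -> forall al be, pw al be -> pw (phi al) (phi be).
Proof. intros Hp al be H k. apply (Hp (S k)); [|lia]. intros j _. apply H. Qed.

Lemma F_a phi x : pw (a (F phi x)) (phi (a x)).
Proof. apply inv_spec. Qed.

Lemma F_cont phi : compat phi -> continuous d (F phi).
Proof.
  intros Hp x eps He. destruct (A1 (F phi x) eps He) as [N HN].
  destruct (A3 x N) as [r [Hr Hb]]. exists r. split; auto. intros y Hy.
  apply HN. intros k Hk. rewrite F_a, F_a. apply (Hp N); auto.
Qed.

Lemma F_inv phi psi : compat phi -> (forall al, pw (phi (psi al)) al) ->
  forall x, F phi (F psi x) = x.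
Proof.
  intros Hp Hpp x. apply a_inj. intros k. rewrite F_a.
  rewrite (compat_pw phi Hp _ (psi (a x)) (F_a psi x)). apply Hpp.
Qed.

Lemma F_homeo phi psi : compat phi -> compat psi -> (forall al, pw (phi (psi al)) al) ->
  (forall al, pw (psi (phi al)) al) -> homeo d (F phi) (F psi).
Proof.
  intros H1 H2 H3 H4. split; [|split; [|split]].
  apply F_cont; auto. apply F_cont; auto. apply F_inv; auto. apply F_inv; auto.
Qed.

Lemma F_iter phi : compat phi -> forall m x, pw (a (Nat.iter m (F phi) x)) (Nat.iter m phi (a x)).
Proof.
  intros Hp m x. induction m as [|m IH]; simpl. intro; reflexivity.
  intros k. rewrite F_a. apply (compat_pw phi Hp). exact IH.
Qed.

Lemma compat_succ : compat succ. Proof. intros N al be. apply succ_agree. Qed.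
Lemma compat_pred : compat pred. Proof. intros N al be. apply pred_agree. Qed.
Lemma compat_gsucc K : compat (gsucc K). Proof. intros N al be. apply gsucc_agree. Qed.
Lemma compat_gpred K : compat (gpred K). Proof. intros N al be. apply gpred_agree. Qed.

Lemma f_homeo : homeo d (F succ) (F pred).
Proof.
  apply F_homeo. apply compat_succ. apply compat_pred. apply succ_pred. apply pred_succ.
Qed.

Lemma shadow : continuous_shadowing d (F succ) (F pred).
Proof.
  intros eps He. destruct (U1 eps He) as [N HN]. destruct (U3 N) as [eta [Heta Hs]].
  exists (eta / 2). split. lra. exists (fun x => x 0%Z). split.
  - intros x _ e He'. exists e. split; auto. intros y _ [c [Hc' Hi]].
    specialize (Hi 0%Z). simpl in Hi. lra.
  - intros x Hx.
    assert (Step : forall i, agree N (succ (a (x i))) (a (x (i + 1)%Z))).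
    { intros i. intros k Hk. rewrite <- (F_a succ (x i) k). apply Hs; auto.
      specialize (Hx i). lra. }
    assert (Pos : forall n, agree N (a (Nat.iter n (F succ) (x 0%Z))) (a (x (Z.of_nat n)))).
    { induction n as [|n IH]. intros k _. reflexivity.
      simpl Nat.iter. intros k Hk. rewrite F_a.
      replace (Z.of_nat (S n)) with (Z.of_nat n + 1)%Z by lia.
      rewrite <- (Step _ k Hk). apply (succ_agree N); auto. }
    assert (Neg : forall n, agree N (a (Nat.iter n (F pred) (x 0%Z))) (a (x (- Z.of_nat n)%Z))).
    { induction n as [|n IH]. intros k _. reflexivity.
      simpl Nat.iter. intros k Hk. rewrite F_a.
      rewrite (pred_agree N _ _ IH k Hk).
      specialize (Step (- Z.of_nat (S n))%Z).
      replace (- Z.of_nat (S n) + 1)%Z with (- Z.of_nat n)%Z in Step by lia.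
      rewrite <- (pred_agree N _ _ Step k Hk). apply pred_succ. }
    intros [|p|p]; simpl zpow.
    + rewrite (d_xx d Hm). lra.
    + apply Rlt_le, HN. rewrite <- positive_nat_Z. apply Pos.
    + apply Rlt_le, HN. replace (Z.neg p) with (- Z.of_nat (Pos.to_nat p))%Z.
      apply Neg. rewrite positive_nat_Z. reflexivity.
Qed.

Lemma not_stable : ~ topologically_stable d (F succ) (F pred).
Proof.
  intros Hst. destruct (Hst 1 Rlt_0_1) as [del [Hdel Hs]].
  destruct (U1 (del/2)) as [K HK]. lra.
  destruct (Hs (F (gsucc K)) (F (gpred K))) as [h [Hhc [Hhd Hhg]]].
  - apply F_homeo. apply compat_gsucc. apply compat_gpred. apply gsucc_gpred. apply gpred_gsucc.
  - split; exists (del/2); split; try lra; intros x; apply Rlt_le, HK; intros k Hk;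
      rewrite !F_a; unfold gsucc, gpred; rewrite (proj2 (Nat.ltb_lt k K)) by lia; reflexivity.
  - destruct Hinh as [x].
    assert (Hper : Nat.iter (2 ^ K) (F (gsucc K)) x = x).
    { apply a_inj. intros k. rewrite (F_iter _ (compat_gsucc K)). apply gsucc_period. }
    assert (Hh : forall m, h (Nat.iter m (F (gsucc K)) x) = Nat.iter m (F succ) (h x)).
    { induction m as [|m IH]; simpl; auto. rewrite Hhg, IH. reflexivity. }
    specialize (Hh (2 ^ K)%nat). rewrite Hper in Hh.
    pose proof (F_iter _ compat_succ (2 ^ K) (h x) K) as E.
    rewrite <- Hh, iter_pow_digit in E. destruct (a (h x) K); discriminate.
Qed.

End Dyn.

Theorem corollary1p1 (X : Type) (d : X -> X -> R) :
  cantor_space d ->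
  exists f finv : X -> X,
    homeo d f finv /\ continuous_shadowing d f finv /\
    ~ topologically_stable d f finv.
Proof.
  intros [Hm [Hinh [Hc [Hni Htd]]]].
  set (B := Bs d Hm Hc Htd).
  pose proof (Bs_clopen d Hm Hc Htd) as HBc.
  pose proof (Bs_base d Hm Hc Htd) as HBb.
  set (a := addr B).
  pose proof (fun x eps He => addr_mesh d Hm Hni Hinh B HBc HBb x eps He) as A1.
  pose proof (addr_surj d Hm Hc Hni Hinh B HBc HBb) as A2.
  pose proof (addr_cont d B HBc) as A3.
  exists (F a A2 succ), (F a A2 pred).
  split; [|split].
  - exact (f_homeo d Hm a A1 A2 A3).
  - exact (shadow d Hm Hc a A1 A2 A3).
  - exact (not_stable d Hm Hc Hinh a A1 A2 A3).
Qed.
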